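(* Consider the equation $u_{tx}=2u_yu_{xx}+4u_xu_{xy}-u_{xxxy}$ and the hierarchy of symmetries $\{\chi_{2k+1}\}_{k\ge0}$ defined by $\chi_1=u_x$ and $\mathcal{R}_0(\chi_{2k+1})=-\chi_{2k+3}$, where $\Psi=\mathcal{R}_0(\Phi)$ iff $\Psi_x=4u_x\Phi_x+2u_{xx}\Phi-\Phi_{xxx}$, $\Psi_y=\Phi_t-2u_y\Phi_x+2u_{xy}\Phi$. Then this hierarchy is commutative: the Jacobi bracket $\{\chi_{2i+1},\chi_{2j+1}\}$ vanishes for all $i,j\ge 0$.
   Context: Symmetries are generating functions $\phi$ satisfying the linearized equation $D_xD_t\phi-2u_{xx}D_y\phi-2u_yD_x^2\phi-4u_{xy}D_x\phi-4u_xD_xD_y\phi+D_x^3D_y\phi=0$ on solutions. The symmetries $\chi_{2k+1}$ are local functions of $u$ and its $x$-derivatives (e.g. $\chi_3=u_{xxx}-3u_x^2$). The Jacobi bracket of generating functions $\phi_1,\phi_2$ is $\{\phi_1,\phi_2\}=\sum_\sigma\big(D_\sigma(\phi_1)\partial\phi_2/\partial u_\sigma-D_\sigma(\phi_2)\partial\phi_1/\partial u_\sigma\big)$, the generating function of the commutator of the evolutionary vector fields $\mathrm{Ev}_{\phi_1},\mathrm{Ev}_{\phi_2}$. *)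

(* Defs.v *)
(* Differential polynomials in the jet variables
   u_{x^i y^j t^k}, modelled as syntactic expressions with coefficients in a
   real field R, interpreted as polynomial functions on the (infinite) jet
   space.  "On solutions" = on the infinite prolongation of the equation. *)
From HB Require Import structures.
From mathcomp Require Import all_boot all_order all_algebra.
Set Implicit Arguments. Unset Strict Implicit. Unset Printing Implicit Defensive.
Import Order.TTheory GRing.Theory Num.Theory.
Local Open Scope ring_scope.

Section Jets.
Variable R : realFieldType.

(* Var i j k  stands for  u_{x^i y^j t^k} *)
Inductive dexp : Type :=
| Cst of R
| Var of nat & nat & nat
| Add of dexp & dexp
| Mul of dexp & dexp.

Definition Opp (e : dexp) := Mul (Cst (-1)) e.
Definition Sub (a b : dexp) := Add a (Opp b).

Definition jet := nat -> nat -> nat -> R.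

Fixpoint eval (J : jet) (e : dexp) : R :=
  match e with
  | Cst c => c
  | Var i j k => J i j k
  | Add a b => eval J a + eval J b
  | Mul a b => eval J a * eval J b
  end.

(* total derivative in the direction (dx,dy,dt) (a unit vector) *)
Fixpoint Dtot (dx dy dt : nat) (e : dexp) : dexp :=
  match e with
  | Cst _ => Cst 0
  | Var i j k => Var (i + dx) (j + dy) (k + dt)
  | Add a b => Add (Dtot dx dy dt a) (Dtot dx dy dt b)
  | Mul a b => Add (Mul (Dtot dx dy dt a) b) (Mul a (Dtot dx dy dt b))
  end.

Definition Dx := Dtot 1 0 0.
Definition Dy := Dtot 0 1 0.
Definition Dt := Dtot 0 0 1.

Definition Dsig (i j k : nat) (e : dexp) : dexp :=
  iter i Dx (iter j Dy (iter k Dt e)).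

Fixpoint pd (i j k : nat) (e : dexp) : dexp :=
  match e with
  | Cst _ => Cst 0
  | Var a b c => if (a == i) && (b == j) && (c == k) then Cst 1 else Cst 0
  | Add a b => Add (pd i j k a) (pd i j k b)
  | Mul a b => Add (Mul (pd i j k a) b) (Mul a (pd i j k b))
  end.

Fixpoint vars (e : dexp) : seq (nat * nat * nat) :=
  match e with
  | Cst _ => [::]
  | Var i j k => [:: (i, j, k)]
  | Add a b => vars a ++ vars b
  | Mul a b => vars a ++ vars b
  end.

(* Jacobi bracket:  sum_sigma D_sigma(p) dq/du_sigma - D_sigma(q) dp/du_sigma.
   Only sigma's occurring in p or q contribute. *)
Definition jacobi (p q : dexp) : dexp :=
  foldr (fun s acc =>
           let '(i, j, k) := s in
           Add (Sub (Mul (Dsig i j k p) (pd i j k q))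
                    (Mul (Dsig i j k q) (pd i j k p))) acc)
        (Cst 0) (undup (vars p ++ vars q)).

Definition u_x := Var 1 0 0.
Definition u_y := Var 0 1 0.
Definition u_xx := Var 2 0 0.
Definition u_xy := Var 1 1 0.

Definition Eqn : dexp :=
  Sub (Var 1 0 1)
      (Sub (Add (Mul (Cst 2) (Mul u_y u_xx)) (Mul (Cst 4) (Mul u_x u_xy)))
           (Var 3 1 0)).

Definition on_solutions (J : jet) : Prop :=
  forall i j k, eval J (Dsig i j k Eqn) = 0.

Definition eq_on_sol (a b : dexp) : Prop :=
  forall J, on_solutions J -> eval J a = eval J b.

Definition x_only (e : dexp) : Prop :=
  forall J J' : jet, (forall i, J i 0 0 = J' i 0 0) -> eval J e = eval J' e.

Definition R0_rel (Phi Psi : dexp) : Prop :=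
  eq_on_sol (Dx Psi)
    (Sub (Add (Mul (Cst 4) (Mul u_x (Dx Phi))) (Mul (Cst 2) (Mul u_xx Phi)))
         (Dx (Dx (Dx Phi)))) /\
  eq_on_sol (Dy Psi)
    (Add (Sub (Dt Phi) (Mul (Cst 2) (Mul u_y (Dx Phi))))
         (Mul (Cst 2) (Mul u_xy Phi))).

End Jets.

(* Main.v *)
Require Import Defs.
From HB Require Import structures.
From mathcomp Require Import all_boot all_order all_algebra ring lra zify.
Import Order.TTheory GRing.Theory Num.Theory.
Local Open Scope ring_scope.


Section Basic.
Variable R : realFieldType.
Notation E := (dexp R).
Notation jetR := (jet R).

Definition eqv (a b : E) := forall J : jetR, eval J a = eval J b.

Lemma eval_ext (J J' : jetR) e :
  (forall i j k, J i j k = J' i j k) -> eval J e = eval J' e.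
Proof. by move=> H; elim: e => //= [a -> b -> | a -> b ->]. Qed.

Definition upd (J : jetR) i j k (v : R) : jetR :=
  fun a b c => if (a == i) && (b == j) && (c == k) then v else J a b c.

Fixpoint evalP (J : jetR) i j k (e : E) : {poly R} :=
  match e with
  | Cst c => c%:P
  | Var a b c => if (a == i) && (b == j) && (c == k) then (J a b c)%:P + 'X
                 else (J a b c)%:P
  | Add a b => evalP J i j k a + evalP J i j k b
  | Mul a b => evalP J i j k a * evalP J i j k b
  end.

Lemma evalP_horner (J : jetR) i j k (e : E) h :
  (evalP J i j k e).[h] = eval (upd J i j k (J i j k + h)) e.
Proof.
elim: e => /= [c|a b c|a IHa b IHb|a IHa b IHb]; rewrite ?hornerE ?IHa ?IHb //.
rewrite /upd; case: ifP => H; rewrite !hornerE //.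
by move: H => /andP[/andP[/eqP-> /eqP->] /eqP->].
Qed.

Lemma evalP_deriv (J : jetR) i j k (e : E) h :
  (evalP J i j k e)^`().[h] = eval (upd J i j k (J i j k + h)) (pd i j k e).
Proof.
elim: e => /= [c|a b c|a IHa b IHb|a IHa b IHb].
- by rewrite derivC hornerE.
- by case: ifP => _; rewrite ?derivD ?derivX derivC !hornerE.
- by rewrite derivD hornerD IHa IHb.
- by rewrite derivM hornerD !hornerM IHa IHb !evalP_horner.
Qed.

Lemma upd0 (J : jetR) i j k (e : E) : eval (upd J i j k (J i j k + 0)) e = eval J e.
Proof.
apply: eval_ext => a b c; rewrite /upd addr0; case: ifP => // H.
by move: H => /andP[/andP[/eqP-> /eqP->] /eqP->].
Qed.

Lemma poly_eq_fun (p q : {poly R}) : (forall h, p.[h] = q.[h]) -> p = q.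
Proof.
move=> H; apply/eqP; rewrite -subr_eq0; apply/negPn/negP => nz.
suff: (size [seq (i%:R : R) | i <- iota 0 (size (p - q)%R)] < size (p - q)%R)%N.
  by rewrite size_map size_iota ltnn.
apply: max_poly_roots nz _ _.
  by apply/allP => x _; rewrite /root !hornerE H subrr.
by rewrite map_inj_uniq ?iota_uniq // => m n /eqP; rewrite eqr_nat => /eqP.
Qed.

Lemma pd_compat i j k (e e' : E) : eqv e e' -> eqv (pd i j k e) (pd i j k e').
Proof.
move=> H J; rewrite -(upd0 J i j k (pd i j k e)) -(upd0 J i j k (pd i j k e')).
rewrite -!evalP_deriv; congr (_.[_]); congr deriv.
by apply: poly_eq_fun => h; rewrite !evalP_horner H.
Qed.

Lemma pd_notin i j k (e : E) (J : jetR) : (i, j, k) \notin vars e -> eval J (pd i j k e) = 0.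
Proof.
elim: e => /= [c|a b c|a IHa b IHb|a IHa b IHb]; rewrite ?mem_cat ?negb_or.
- by [].
- case: ifP => // /andP[/andP[/eqP-> /eqP->] /eqP->].
  by rewrite eqxx.
- by case/andP => /IHa-> /IHb->; rewrite addr0.
- by case/andP => /IHa-> /IHb->; rewrite mul0r mulr0 addr0.
Qed.

Lemma sum_pick (T : eqType) (s : seq T) (x : T) (F : T -> R) :
  uniq s -> \sum_(y <- s) (if y == x then F y else 0) = if x \in s then F x else 0.
Proof.
elim: s => [|y s IH] /=; first by rewrite big_nil.
case/andP => ny us; rewrite big_cons IH // inE.
case: (eqVneq y x) => [<-|nyx]; first by rewrite (negbTE ny) addr0.
by rewrite add0r.
Qed.

Definition pdS (s : nat * nat * nat) (e : E) := pd s.1.1 s.1.2 s.2 e.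

Lemma chain_Dtot dx dy dt (e : E) (s : seq (nat * nat * nat)) J :
  uniq s -> {subset vars e <= s} ->
  eval J (Dtot dx dy dt e) =
  \sum_(x <- s) eval J (pdS x e) * J (x.1.1 + dx)%N (x.1.2 + dy)%N (x.2 + dt)%N.
Proof.
move=> us; elim: e => /= [c|a b c|a IHa b IHb|a IHa b IHb] sub.
- by rewrite big1 // => x _; rewrite mul0r.
- have ins : (a, b, c) \in s by apply: sub; rewrite inE.
  have := @sum_pick _ s (a,b,c) (fun x : nat*nat*nat => J (x.1.1 + dx)%N (x.1.2 + dy)%N (x.2 + dt)%N) us.
  rewrite ins /= => <-; apply: eq_bigr => [[[x y] z]] _ /=.
  rewrite /pdS /= [(x, y, z) == _]eq_sym xpair_eqE xpair_eqE.
  by case: ifP => _ /=; rewrite ?mul1r ?mul0r.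
- have sa : {subset vars a <= s} by move=> x xi; apply: sub; rewrite mem_cat xi.
  have sb : {subset vars b <= s} by move=> x xi; apply: sub; rewrite mem_cat xi orbT.
  rewrite (IHa sa) (IHb sb) -big_split /=; apply: eq_bigr => x _; rewrite /pdS /=; ring.
- have sa : {subset vars a <= s} by move=> x xi; apply: sub; rewrite mem_cat xi.
  have sb : {subset vars b <= s} by move=> x xi; apply: sub; rewrite mem_cat xi orbT.
  rewrite (IHa sa) (IHb sb) mulr_suml mulr_sumr -big_split /=.
  apply: eq_bigr => x _; rewrite /pdS /=; ring.
Qed.

Lemma vars_sub_undup (l1 l2 : seq (nat*nat*nat)) :
  {subset l1 <= undup (l1 ++ l2)} /\ {subset l2 <= undup (l1 ++ l2)}.
Proof. by split=> x xi; rewrite mem_undup mem_cat xi ?orbT. Qed.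

Lemma Dtot_compat dx dy dt (e e' : E) : eqv e e' -> eqv (Dtot dx dy dt e) (Dtot dx dy dt e').
Proof.
move=> H J; have [s1 s2] := vars_sub_undup (vars e) (vars e').
rewrite (chain_Dtot _ _ _ _ _ _ (undup_uniq _) s1) (chain_Dtot _ _ _ _ _ _ (undup_uniq _) s2).
by apply: eq_bigr => x _; rewrite /pdS (pd_compat _ _ _ _ _ H).
Qed.



Fixpoint Ev (g e : E) : E :=
  match e with
  | Cst _ => Cst 0
  | Var i j k => Dsig i j k g
  | Add a b => Add (Ev g a) (Ev g b)
  | Mul a b => Add (Mul (Ev g a) b) (Mul a (Ev g b))
  end.

Definition DsigS (s : nat * nat * nat) (g : E) := Dsig s.1.1 s.1.2 s.2 g.

Lemma chain_Ev (g e : E) (s : seq (nat * nat * nat)) J :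
  uniq s -> {subset vars e <= s} ->
  eval J (Ev g e) = \sum_(x <- s) eval J (DsigS x g) * eval J (pdS x e).
Proof.
move=> us; elim: e => /= [c|a b c|a IHa b IHb|a IHa b IHb] sub.
- by rewrite big1 // => x _; rewrite mulr0.
- have ins : (a, b, c) \in s by apply: sub; rewrite inE.
  have := @sum_pick _ s (a,b,c) (fun x : nat*nat*nat => eval J (DsigS x g)) us.
  rewrite ins /= => <-; apply: eq_bigr => [[[x y] z]] _ /=.
  rewrite /pdS /= [(x, y, z) == _]eq_sym xpair_eqE xpair_eqE.
  by case: ifP => _ /=; rewrite ?mulr1 ?mulr0.
- have sa : {subset vars a <= s} by move=> x xi; apply: sub; rewrite mem_cat xi.
  have sb : {subset vars b <= s} by move=> x xi; apply: sub; rewrite mem_cat xi orbT.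
  rewrite (IHa sa) (IHb sb) -big_split /=; apply: eq_bigr => x _; rewrite /pdS /=; ring.
- have sa : {subset vars a <= s} by move=> x xi; apply: sub; rewrite mem_cat xi.
  have sb : {subset vars b <= s} by move=> x xi; apply: sub; rewrite mem_cat xi orbT.
  rewrite (IHa sa) (IHb sb) mulr_suml mulr_sumr -big_split /=.
  apply: eq_bigr => x _; rewrite /pdS /=; ring.
Qed.

Lemma jacobi_eval (p q : E) J :
  eval J (jacobi p q) = eval J (Ev p q) - eval J (Ev q p).
Proof.
have [s1 s2] := vars_sub_undup (vars p) (vars q).
rewrite (chain_Ev _ _ _ _ (undup_uniq _) s1) (chain_Ev _ _ _ _ (undup_uniq _) s2).
rewrite /jacobi -sumrB; elim: (undup _) => [|[[i j] k] s IH] /=.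
  by rewrite big_nil.
by rewrite big_cons IH /DsigS /pdS /=; congr (_ + _); ring.
Qed.

Lemma Dsig_compat i j k (g g' : E) : eqv g g' -> eqv (Dsig i j k g) (Dsig i j k g').
Proof.
move=> H; rewrite /Dsig; elim: i => [|i IHi] /=; last by apply: Dtot_compat.
elim: j => [|j IHj] /=; last by apply: Dtot_compat.
by elim: k => [|k IHk] //=; apply: Dtot_compat.
Qed.

Lemma Ev_compat_g (g g' e : E) : eqv g g' -> eqv (Ev g e) (Ev g' e).
Proof.
move=> H J; elim: e => /= [c|a b c|a -> b ->|a -> b ->] //.
exact: Dsig_compat.
Qed.

Lemma Ev_compat_e (g e e' : E) : eqv e e' -> eqv (Ev g e) (Ev g e').
Proof.
move=> H J; have [s1 s2] := vars_sub_undup (vars e) (vars e').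
rewrite (chain_Ev _ _ _ _ (undup_uniq _) s1) (chain_Ev _ _ _ _ (undup_uniq _) s2).
by apply: eq_bigr => x _; rewrite /pdS (pd_compat _ _ _ _ _ H).
Qed.

Lemma Ev_Dx (g e : E) : eqv (Ev g (Dx e)) (Dx (Ev g e)).
Proof.
move=> J; elim: e => [c|a b c|a IHa b IHb|a IHa b IHb] //=.
- by rewrite addn1 !addn0.
- by rewrite IHa IHb.
- rewrite IHa IHb; ring.
Qed.

Definition J0 : jetR := fun _ _ _ => 0.

Lemma J0_Dtot dx dy dt (e : E) : eval J0 (Dtot dx dy dt e) = 0.
Proof. by elim: e => [c|a b c|a IHa b IHb|a IHa b IHb] //=; rewrite ?IHa ?IHb ?addr0 ?mulr0 ?mul0r ?addr0. Qed.

Lemma J0_Ev (g e : E) : eval J0 (Ev g e) = eval J0 g * eval J0 (pd 0 0 0 e).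
Proof.
elim: e => /= [c|a b c|a -> b ->|a -> b ->]; rewrite ?mulr0 //.
- case: a => [|a]; first case: b => [|b]; first case: c => [|c].
  + by rewrite /= mulr1.
  + by rewrite /Dsig /= /Dt J0_Dtot ?mul0r ?mulr0.
  + by rewrite /Dsig /= /Dy J0_Dtot ?mul0r ?mulr0.
  + by rewrite /Dsig /= /Dx J0_Dtot ?mul0r ?mulr0.
- by rewrite mulrDr.
- ring.
Qed.

Lemma Dtot_scale dx dy dt r (g : E) :
  eqv (Dtot dx dy dt (Mul (Cst r) g)) (Mul (Cst r) (Dtot dx dy dt g)).
Proof. by move=> J /=; rewrite mul0r add0r. Qed.

Lemma Dsig_scale i j k r (g : E) :
  eqv (Dsig i j k (Mul (Cst r) g)) (Mul (Cst r) (Dsig i j k g)).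
Proof.
rewrite /Dsig; elim: i => [|i IHi] /=.
  elim: j => [|j IHj] /=.
    elim: k => [|k IHk] //= J.
    by rewrite (Dtot_compat _ _ _ _ _ IHk) /= mul0r add0r.
  by move=> J; rewrite (Dtot_compat _ _ _ _ _ IHj) /= mul0r add0r.
by move=> J; rewrite (Dtot_compat _ _ _ _ _ IHi) /= mul0r add0r.
Qed.

Lemma Ev_scale r (g e : E) J : eval J (Ev (Mul (Cst r) g) e) = r * eval J (Ev g e).
Proof.
elim: e => /= [c|a b c|a -> b ->|a -> b ->]; rewrite ?mulr0 //.
- by rewrite Dsig_scale.
- by rewrite mulrDr.
- ring.
Qed.

Fixpoint xo (e : E) : bool :=
  match e with
  | Cst _ => true
  | Var i j k => (j == 0%N) && (k == 0%N)
  | Add a b => xo a && xo b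
  | Mul a b => xo a && xo b
  end.

Lemma xo_Dx (e : E) : xo e -> xo (Dx e).
Proof.
elim: e => [c|a b c|a IHa b IHb|a IHa b IHb] //=.
- by rewrite !addn0.
- by case/andP => ha hb; rewrite IHa ?IHb.
- by case/andP => ha hb; rewrite IHa ?IHb ?ha ?hb.
Qed.

Lemma xo_iterDx n (e : E) : xo e -> xo (iter n (@Dx R) e).
Proof. by elim: n => //= n IH /IH /xo_Dx. Qed.

Lemma xo_pd i j k (e : E) : xo e -> xo (pd i j k e).
Proof.
elim: e => [c|a b c|a IHa b IHb|a IHa b IHb] //=.
- by case: ifP.
- by case/andP => ha hb; rewrite IHa ?IHb.
- by case/andP => ha hb; rewrite IHa ?IHb ?ha ?hb.
Qed.

Lemma xo_Ev (g e : E) : xo g -> xo e -> xo (Ev g e).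
Proof.
move=> xg; elim: e => //= [a b c|a IHa b IHb|a IHa b IHb].
- by case/andP => /eqP-> /eqP->; rewrite /Dsig /=; apply: xo_iterDx.
- by case/andP => ha hb; rewrite IHa ?IHb.
- by case/andP => ha hb; rewrite IHa ?IHb ?ha ?hb.
Qed.

Lemma xo_eval (e : E) (J J' : jetR) : xo e -> (forall i, J i 0%N 0%N = J' i 0%N 0%N) ->
  eval J e = eval J' e.
Proof.
move=> + H; elim: e => //= [a b c|a IHa b IHb|a IHa b IHb].
- by case/andP => /eqP-> /eqP->.
- by case/andP => /IHa-> /IHb->.
- by case/andP => /IHa-> /IHb->.
Qed.

Lemma xo_vars (e : E) x : xo e -> x \in vars e -> x.1.2 = 0%N /\ x.2 = 0%N.
Proof.
elim: e => //= [a b c|a IHa b IHb|a IHa b IHb].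
- by case/andP => /eqP-> /eqP->; rewrite inE => /eqP->.
- by case/andP => ha hb; rewrite mem_cat => /orP[/(IHa ha)|/(IHb hb)].
- by case/andP => ha hb; rewrite mem_cat => /orP[/(IHa ha)|/(IHb hb)].
Qed.

Fixpoint sx (e : E) : E :=
  match e with
  | Cst c => Cst c
  | Var i j k => if (j == 0%N) && (k == 0%N) then Var R i 0 0 else Cst 0
  | Add a b => Add (sx a) (sx b)
  | Mul a b => Mul (sx a) (sx b)
  end.

Definition projJ (J : jetR) : jetR :=
  fun i j k => if (j == 0%N) && (k == 0%N) then J i 0%N 0%N else 0.

Lemma eval_sx (e : E) J : eval J (sx e) = eval (projJ J) e.
Proof. by elim: e => [c|a b c|a IHa b IHb|a IHa b IHb] //=; rewrite ?IHa ?IHb // /projJ; case: ifP. Qed.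

Lemma xo_sx (e : E) : xo (sx e).
Proof. by elim: e => [c|a b c|a IHa b IHb|a IHa b IHb] //=; rewrite ?IHa ?IHb //; case: ifP. Qed.



Definition Js (s : nat -> R) : jetR :=
  fun i j k => if (j == 0%N) && (k == 0%N) then s i else 0.
Definition supd (s : nat -> R) m v : nat -> R := fun n => if n == m then v else s n.

Definition depx (f : E) N :=
  forall s s', (forall n, (n < N)%N -> s n = s' n) -> eval (Js s) f = eval (Js s') f.

Lemma eval_vars (f : E) (J J' : jetR) :
  (forall a b c, (a, b, c) \in vars f -> J a b c = J' a b c) -> eval J f = eval J' f.
Proof.
elim: f => //= [a b c|a IHa b IHb|a IHa b IHb] H.
- by apply: H; rewrite inE.
- by rewrite IHa ?IHb // => x y z xi; apply: H; rewrite mem_cat xi ?orbT.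
- by rewrite IHa ?IHb // => x y z xi; apply: H; rewrite mem_cat xi ?orbT.
Qed.

Lemma bound_exists (f : E) : exists N, forall x, x \in vars f -> (x.1.1 < N)%N.
Proof.
elim: f => /= [c|a b c|a [Na Ha] b [Nb Hb]|a [Na Ha] b [Nb Hb]].
- by exists 0%N.
- by exists a.+1 => x; rewrite inE => /eqP->.
- by exists (maxn Na Nb) => x; rewrite mem_cat leq_max => /orP[/Ha|/Hb] ->; rewrite ?orbT.
- by exists (maxn Na Nb) => x; rewrite mem_cat leq_max => /orP[/Ha|/Hb] ->; rewrite ?orbT.
Qed.

Lemma dep_bound (f : E) : xo f -> exists N, depx f N.
Proof.
move=> xf; have [N HN] := bound_exists f; exists N => s s' H.
apply: eval_vars => a b c abc; have [/= -> ->] := xo_vars _ _ xf abc.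
by rewrite /Js /= H // (HN _ abc).
Qed.

Lemma Js_upd s m h : forall a b c,
  upd (Js s) m 0 0 (Js s m 0 0 + h) a b c = Js (supd s m (s m + h)) a b c.
Proof.
move=> a b c; rewrite /upd /Js /supd /=.
case: (eqVneq a m) => [->|nam] /=; last by case: ifP.
by case: (b == 0%N); case: (c == 0%N).
Qed.

Lemma evalP_Js s m (f : E) h :
  (evalP (Js s) m 0 0 f).[h] = eval (Js (supd s m (s m + h))) f.
Proof. rewrite evalP_horner; apply: eval_ext; exact: Js_upd. Qed.

Lemma evalP_Js_deriv s m (f : E) h :
  (evalP (Js s) m 0 0 f)^`().[h] = eval (Js (supd s m (s m + h))) (pd m 0 0 f).
Proof. rewrite evalP_deriv; apply: eval_ext; exact: Js_upd. Qed.

Lemma supd0 s m : forall n, supd s m (s m + 0) n = s n.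
Proof. by move=> n; rewrite /supd addr0; case: eqP => [->|]. Qed.

Lemma eval_Js_ext s s' (f : E) : (forall n, s n = s' n) -> eval (Js s) f = eval (Js s') f.
Proof. by move=> H; apply: eval_ext => a b c; rewrite /Js H. Qed.

Lemma pd_Js s m (f : E) : eval (Js s) (pd m 0 0 f) = (evalP (Js s) m 0 0 f)^`().[0].
Proof. by rewrite evalP_Js_deriv; apply: eval_Js_ext => n; rewrite supd0. Qed.

Lemma deriv0_const (p : {poly R}) : p^`() = 0 -> forall h, p.[h] = p.[0].
Proof.
move=> H h; have -> : p = (p`_0)%:P.
  apply/polyP => i; rewrite coefC; case: i => [|i] //=.
  have := congr1 (fun q : {poly R} => q`_i) H; rewrite coef_deriv coef0.
  by move/eqP; rewrite -mulr_natr mulf_eq0 pnatr_eq0 orbF => /eqP.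
by rewrite !hornerC.
Qed.

Lemma const_deriv0 (p : {poly R}) : (forall h, p.[h] = p.[0]) -> p^`() = 0.
Proof.
move=> H; have -> : p = (p.[0])%:P by apply: poly_eq_fun => h; rewrite hornerC H.
by rewrite derivC.
Qed.

Lemma pd_dep (f : E) N m : depx f N -> depx (pd m 0 0 f) N.
Proof.
move=> Hf s s' H; rewrite !pd_Js.
case: (ltnP m N) => [mN|Nm].
  congr (_.[_]); congr deriv; apply: poly_eq_fun => h; rewrite !evalP_Js.
  by apply: Hf => n nN; rewrite /supd; case: eqP => _; rewrite ?H.
have K : forall s0, (evalP (Js s0) m 0 0 f)^`() = 0.
  move=> s0; apply: const_deriv0 => h; rewrite !evalP_Js.
  apply: Hf => n nN; rewrite /supd; case: eqP => // nm.
  by move: nN; rewrite nm ltnNge Nm.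
by rewrite !K.
Qed.

Lemma kernel_step (f : E) m :
  xo f -> (forall J, eval J (Dx f) = 0) -> depx f m.+1 -> depx f m.
Proof.
move=> xf HD Hf.
have Z : forall t, eval (Js t) (pd m 0 0 f) = 0.
  move=> t; pose t' := supd t m.+1 (t m.+1 + 1).
  have us := undup_uniq (vars f).
  have sub : {subset vars f <= undup (vars f)} by move=> x; rewrite mem_undup.
  have e1 := chain_Dtot 1 0 0 f _ (Js t) us sub.
  have e2 := chain_Dtot 1 0 0 f _ (Js t') us sub.
  rewrite HD in e1; rewrite HD in e2.
  have : 0 = \sum_(x <- undup (vars f)) (if x == (m, 0%N, 0%N) then eval (Js t) (pdS x f) else 0).
    rewrite -[LHS]subr0 [X in X - _ = _]e2 [X in _ - X = _]e1 -sumrB.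
    apply: eq_big_seq => x; rewrite mem_undup => xi.
    have [x2 x3] := xo_vars _ _ xf xi.
    move: xi x2 x3; case: x => [[i j] k] /= xi -> ->.
    have -> : eval (Js t') (pdS (i, 0%N, 0%N) f) = eval (Js t) (pdS (i, 0%N, 0%N) f).
      apply: (pd_dep f m.+1 i Hf) => n nm; rewrite /t' /supd.
      by case: eqP => // nm1; move: nm; rewrite nm1 ltnn.
    rewrite -mulrBr /Js /= /t' /supd addn1 eqSS xpair_eqE xpair_eqE !eqxx !andbT.
    by case: eqP => [->|_]; rewrite ?subrr ?mulr0 // addrAC subrr add0r mulr1.
  rewrite sum_pick // mem_undup; case: ifP => // /negbT nin _.
  exact: pd_notin.
move=> s s' H.
pose P := evalP (Js s) m 0 0 f.
have dP : P^`() = 0.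
  apply: poly_eq_fun => h; rewrite evalP_Js_deriv Z; by rewrite hornerC.
have := deriv0_const _ dP (s' m - s m).
rewrite /P !evalP_Js.
have -> : s m + (s' m - s m) = s' m by rewrite addrC subrK.
rewrite (eval_Js_ext (supd s m (s m + 0)) s f (supd0 s m)).
move=> <-; apply: Hf => n; rewrite ltnS leq_eqVlt => /orP[/eqP->|nm].
  by rewrite /supd eqxx.
by rewrite /supd; case: eqP => [nm'|_]; [move: nm; rewrite nm' ltnn | exact: H].
Qed.

Lemma kernel (f : E) : xo f -> (forall J, eval J (Dx f) = 0) ->
  forall J, eval J f = eval J0 f.
Proof.
move=> xf HD J; have [N HN] := dep_bound f xf.
have all0 : forall k, depx f (N - k).
  elim=> [|k IH]; first by rewrite subn0.
  case: (leqP N k) => [Nk|kN].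
    have e1 : (N - k.+1 = 0)%N by apply/eqP; rewrite subn_eq0 leqW.
    have e0 : (N - k = 0)%N by apply/eqP; rewrite subn_eq0.
    by rewrite e1; rewrite e0 in IH.
  apply: kernel_step => //; by rewrite subnSK.
have := all0 N; rewrite subnn => H0.
rewrite (xo_eval f J (Js (fun i => J i 0%N 0%N))) //.
rewrite (H0 _ (fun _ => 0)) //; apply: eval_ext => a b c; rewrite /Js /J0; by case: ifP.
Qed.



Definition theta (f : E) : E :=
  Defs.Sub (Dx (Dx (Dx f)))
      (Add (Mul (Cst 4) (Mul (u_x R) (Dx f))) (Mul (Cst 2) (Mul (u_xx R) f))).
Definition W (a b : E) : E := Defs.Sub (Mul a (Dx b)) (Mul b (Dx a)).
Definition F (a b : E) : E := Add (Mul (Cst 2) (Mul (Dx a) (Dx b))) (Mul a (Dx (Dx b))).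

Lemma Dx_compat (e e' : E) : eqv e e' -> eqv (Dx e) (Dx e').
Proof. exact: Dtot_compat. Qed.

Lemma theta_compat (e e' : E) : eqv e e' -> eqv (theta e) (theta e').
Proof.
move=> H J; have H1 := Dx_compat _ _ H; have H2 := Dx_compat _ _ H1.
have H3 := Dx_compat _ _ H2.
by rewrite /= H H1 H3.
Qed.

Lemma Ev_theta (g e : E) J :
  eval J (Ev g (theta e)) = eval J (theta (Ev g e))
     - 4 * eval J (Dx g) * eval J (Dx e) - 2 * eval J (Dx (Dx g)) * eval J e.
Proof.
have E1 := Ev_Dx g e.
have E2 : eqv (Ev g (Dx (Dx e))) (Dx (Dx (Ev g e))).
  by move=> J'; rewrite Ev_Dx; apply: Dx_compat.
have E3 : eqv (Ev g (Dx (Dx (Dx e)))) (Dx (Dx (Dx (Ev g e)))).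
  by move=> J'; rewrite Ev_Dx; apply: Dx_compat.
rewrite /theta /= E1 E3 /u_x /u_xx /= /Dsig /=; ring.
Qed.

Fixpoint sumd (f : nat -> E) n : E :=
  match n with 0%N => Cst 0 | n'.+1 => Add (sumd f n') (f n') end.

Lemma eval_sumd f n J : eval J (sumd f n) = \sum_(0 <= k < n) eval J (f k).
Proof. by elim: n => [|n IH] /=; rewrite ?big_nil // big_nat_recr //= IH. Qed.

Lemma eval_Dx_sumd f n J : eval J (Dx (sumd f n)) = \sum_(0 <= k < n) eval J (Dx (f k)).
Proof. by elim: n => [|n IH] /=; rewrite ?big_nil // big_nat_recr //= -IH. Qed.

Lemma eval_theta_sumd f n J : eval J (theta (sumd f n)) = \sum_(0 <= k < n) eval J (theta (f k)).
Proof.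
elim: n => [|n IH]; first by rewrite big_nil /=; ring.
rewrite big_nat_recr //= -IH /=; ring.
Qed.

Lemma xo_sumd f n : (forall k, xo (f k)) -> xo (sumd f n).
Proof. by move=> H; elim: n => //= n ->; rewrite H. Qed.

Lemma kernel_eqv (a b : E) : xo a -> xo b -> eqv (Dx a) (Dx b) -> eval J0 a = eval J0 b -> eqv a b.
Proof.
move=> xa xb HD H0 J.
have xs : xo (Defs.Sub a b) by rewrite /= xa xb.
have hs : forall J', eval J' (Dx (Defs.Sub a b)) = 0 by move=> J'; rewrite /= HD; ring.
have K := kernel _ xs hs J; rewrite /= H0 in K.
have K2 : eval J a + -1 * eval J b = 0 by rewrite K; ring.
by apply/eqP; rewrite -subr_eq0 -mulN1r K2.
Qed.

Lemma L1 (a a1 b b1 : E) : eqv (Dx a1) (theta a) -> eqv (Dx b1) (theta b) ->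
  eqv (Defs.Sub (theta (W b a)) (Dx (W b a1))) (Defs.Sub (F a1 b) (F a b1)).
Proof.
move=> Ha Hb J.
have Ha2 := Dx_compat _ _ Ha J; have Hb2 := Dx_compat _ _ Hb J.
have Ha1 := Ha J; have Hb1 := Hb J.
move: Ha1 Hb1 Ha2 Hb2; rewrite /theta /W /F /u_x /u_xx /= ?addn0 ?addn1 /Dx => Ha1 Hb1 Ha2 Hb2.
set D := Dtot 1 0 0 in Ha1 Hb1 Ha2 Hb2 *.
have A3 : eval J (D (D (D a))) = eval J (D a1) + 4 * (J 1%N 0%N 0%N * eval J (D a)) + 2 * (J 2%N 0%N 0%N * eval J a).
  by rewrite Ha1; ring.
have B3 : eval J (D (D (D b))) = eval J (D b1) + 4 * (J 1%N 0%N 0%N * eval J (D b)) + 2 * (J 2%N 0%N 0%N * eval J b).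
  by rewrite Hb1; ring.
have A4 : eval J (D (D (D (D a)))) = eval J (D (D a1)) + 4 * (J 2%N 0%N 0%N * eval J (D a) + J 1%N 0%N 0%N * eval J (D (D a))) + 2 * (J 3%N 0%N 0%N * eval J a + J 2%N 0%N 0%N * eval J (D a)).
  by rewrite Ha2; ring.
have B4 : eval J (D (D (D (D b)))) = eval J (D (D b1)) + 4 * (J 2%N 0%N 0%N * eval J (D b) + J 1%N 0%N 0%N * eval J (D (D b))) + 2 * (J 3%N 0%N 0%N * eval J b + J 2%N 0%N 0%N * eval J (D b)).
  by rewrite Hb2; ring.
rewrite A4 B4 A3 B3; ring.
Qed.



Section Core.
Variable G : nat -> E.
Hypothesis xoG : forall k, xo (G k).
Hypothesis G0 : eqv (G 0%N) (Cst 1).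
Hypothesis Len : forall k, eqv (Dx (G k.+1)) (theta (G k)).
Hypothesis pd0G : forall k J, eval J (pd 0 0 0 (G k)) = 0.

Definition S K L := sumd (fun k => W (G ((K + L).-1 - k)) (G k)) K.

Lemma xoW a b : xo a -> xo b -> xo (W a b).
Proof. by move=> xa xb; rewrite /= xa xb !xo_Dx. Qed.

Lemma xoS K L : xo (S K L).
Proof. by apply: xo_sumd => k; apply: xoW. Qed.

Lemma eval_Sub (a b : E) J : eval J (Defs.Sub a b) = eval J a - eval J b.
Proof. by rewrite /= mulN1r. Qed.

Lemma Stelescope K L :
  eqv (Dx (S K.+1 L)) (Defs.Sub (theta (S K L)) (F (G K) (G L))).
Proof.
move=> J; rewrite eval_Sub /S eval_Dx_sumd eval_theta_sumd.
have T : forall k, (k < K)%N ->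
  eval J (theta (W (G ((K + L).-1 - k)) (G k))) =
  eval J (Dx (W (G ((K + L).-1 - k)) (G k.+1)))
  + (eval J (F (G k.+1) (G (K + L - k.+1)%N)) - eval J (F (G k) (G (K + L - k)%N))).
  move=> k kK; have H := L1 _ _ _ _ (Len k) (Len ((K + L).-1 - k)) J.
  rewrite !eval_Sub (_ : (((K + L).-1 - k).+1 = K + L - k)%N) in H; last by lia.
  rewrite (_ : ((K + L).-1 - k = K + L - k.+1)%N) in H *; last by lia.
  rewrite -H /theta eval_Sub; ring.
rewrite (@eq_big_nat _ _ _ 0 K _ (fun k => eval J (Dx (W (G ((K + L).-1 - k)) (G k.+1)))
  + (eval J (F (G k.+1) (G (K + L - k.+1)%N)) - eval J (F (G k) (G (K + L - k)%N))))); last first.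
  by move=> k /andP[_ kK]; exact: T.
have tel := @telescope_sumr _ 0 K (fun k => eval J (F (G k) (G (K + L - k)%N))) (leq0n K).
cbv beta in tel.
rewrite [in RHS]big_split [in RHS]tel big_nat_recl //.
rewrite subn0 addKn.
have -> : \sum_(0 <= i < K) eval J (Dx (W (G ((K.+1 + L).-1 - i.+1)) (G i.+1)))
        = \sum_(0 <= i < K) eval J (Dx (W (G ((K + L).-1 - i)) (G i.+1))).
  by apply: eq_bigr => i _; rewrite (_ : ((K.+1 + L).-1 - i.+1 = (K + L).-1 - i)%N) //; lia.
rewrite (_ : ((K.+1 + L).-1 = K + L)%N); last by lia.
have g0 := G0 J; have g1 := Dx_compat _ _ G0 J; have g2 := Dx_compat _ _ (Dx_compat _ _ G0) J.
move: g0 g1 g2; rewrite /W /F /= /Dx => g0 g1 g2.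
rewrite g0 g1 g2; ring.
Qed.

Lemma theta_scale r (e : E) J : eval J (theta (Mul (Cst r) e)) = r * eval J (theta e).
Proof. rewrite /theta /=; ring. Qed.

Lemma J0_W (a b : E) : eval J0 (W a b) = 0.
Proof. rewrite /W eval_Sub /= /Dx !J0_Dtot; ring. Qed.

Lemma X_S K L : eqv (Ev (G L) (G K)) (Mul (Cst 2) (S K L)).
Proof.
elim: K L => [|K IH] L.
  by move=> J; rewrite (Ev_compat_e _ _ _ G0 J) /S /=; ring.
apply: kernel_eqv.
- by apply: xo_Ev.
- by have := xoS K.+1 L; rewrite /= => ->.
- move=> J; rewrite -(Ev_Dx (G L) (G K.+1) J) (Ev_compat_e _ _ _ (Len K) J) Ev_theta.
  rewrite (theta_compat _ _ (IH L) J) theta_scale.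
  have -> : eval J (Dx (Mul (Cst 2) (S K.+1 L))) = 2 * eval J (Dx (S K.+1 L)).
    by rewrite /=; ring.
  rewrite Stelescope eval_Sub /F /=; ring.
- rewrite J0_Ev pd0G mulr0.
  have -> : eval J0 (Mul (Cst 2) (S K.+1 L)) = 2 * eval J0 (S K.+1 L) by [].
  rewrite /S eval_sumd big1 ?mulr0 // => k _.
  exact: J0_W.
Qed.

Lemma W_anti (a b : E) J : eval J (W a b) = - eval J (W b a).
Proof. rewrite /W !eval_Sub /=; ring. Qed.

Lemma S_sym_le K L : (K <= L)%N -> eqv (S K L) (S L K).
Proof.
move=> KL J; rewrite /S !eval_sumd (big_cat_nat (leq0n K) KL) /= addnC.
set M := \sum_(K <= k < L) _.
suff -> : M = 0 by rewrite addr0.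
have h : M = - M.
  rewrite {1}/M big_nat_rev -sumrN; apply: eq_big_nat => k /andP[Kk kL].
  rewrite (_ : ((L + K).-1 - (K + L - k.+1) = k)%N); last by lia.
  rewrite (_ : (K + L - k.+1 = (L + K).-1 - k)%N); last by lia.
  ring.
move/eqP: h; rewrite -addr_eq0 -mulr2n mulrn_eq0 /= => /eqP.
by [].
Qed.

Lemma Ev_comm K L J : eval J (Ev (G L) (G K)) = eval J (Ev (G K) (G L)).
Proof.
rewrite (X_S K L J) (X_S L K J) /=; congr (_ * _).
case: (leqP K L) => [KL|/ltnW LK]; first exact: S_sym_le.
by symmetry; apply: S_sym_le.
Qed.

End Core.



Definition Jsol (J : jetR) (h : R) : jetR :=
  fun i j k => if (j == 0%N) && (k == 0%N) then J i 0%N 0%N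
               else if (i == 0%N) && (j == 0%N) && (k == 1%N) then h else 0.

Fixpoint inI (e : E) : bool :=
  match e with
  | Cst _ => false
  | Var i j k => (0 < j)%N || ((0 < i)%N && (0 < k)%N)
  | Add a b => inI a && inI b
  | Mul a b => inI a || inI b
  end.

Lemma inI_eval (e : E) J h : inI e -> eval (Jsol J h) e = 0.
Proof.
elim: e => //= [a b c|a IHa b IHb|a IHa b IHb].
- rewrite /Jsol; case/orP => [b0|/andP[a0 c0]].
    by rewrite (negbTE (lt0n_neq0 b0)) /= andbF.
  by rewrite (negbTE (lt0n_neq0 c0)) (negbTE (lt0n_neq0 a0)) andbF.
- by case/andP => /IHa-> /IHb->; rewrite addr0.
- by case/orP => [/IHa->|/IHb->]; rewrite ?mul0r ?mulr0.
Qed.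

Lemma inI_Dtot dx dy dt (e : E) : inI e -> inI (Dtot dx dy dt e).
Proof.
elim: e => //= [a b c|a IHa b IHb|a IHa b IHb].
- case/orP => [b0|/andP[a0 c0]]; first by rewrite addn_gt0 b0.
  by rewrite !addn_gt0 a0 c0 orbT.
- by case/andP => /IHa-> /IHb->.
- by case/orP => [ha|hb]; [rewrite (IHa ha) ha | rewrite (IHb hb) hb !orbT].
Qed.

Lemma inI_Dsig i j k (e : E) : inI e -> inI (Dsig i j k e).
Proof.
move=> H; rewrite /Dsig; elim: i => [|i IH] /=; last exact: inI_Dtot.
elim: j => [|j IH] /=; last exact: inI_Dtot.
by elim: k => [|k IH] //=; apply: inI_Dtot.
Qed.

Lemma Jsol_sol J h : on_solutions (Jsol J h).
Proof. by move=> i j k; apply: inI_eval; apply: inI_Dsig. Qed.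

Lemma Jsol_x J h i : Jsol J h i 0%N 0%N = J i 0%N 0%N.
Proof. by []. Qed.

Lemma Dy_Jsol (e : E) J h : xo e -> eval (Jsol J h) (Dy e) = 0.
Proof.
move=> xe; have us := undup_uniq (vars e).
have sub : {subset vars e <= undup (vars e)} by move=> x; rewrite mem_undup.
rewrite /Dy (chain_Dtot 0 1 0 e _ _ us sub) big1_seq // => x; rewrite mem_undup => xi.
have [-> ->] := xo_vars _ _ xe xi.
by rewrite /Jsol /= andbF mulr0.
Qed.

Lemma Dt_Jsol (e : E) J h : xo e ->
  eval (Jsol J h) (Dt e) = eval (Jsol J h) (pd 0 0 0 e) * h.
Proof.
move=> xe; have us := undup_uniq (vars e).
have sub : {subset vars e <= undup (vars e)} by move=> x; rewrite mem_undup.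
rewrite /Dt (chain_Dtot 0 0 1 e _ _ us sub).
rewrite (eq_big_seq (fun x => if x == (0%N, 0%N, 0%N) then eval (Jsol J h) (pdS x e) * h else 0)).
  rewrite sum_pick // mem_undup; case: ifP => // /negbT nin.
  by rewrite pd_notin ?mul0r. 
move=> x; rewrite mem_undup => xi; have [x2 x3] := xo_vars _ _ xe xi.
move: xi x2 x3; case: x => [[a b] c] /= _ -> ->.
rewrite /Jsol /= !addn0 add0n xpair_eqE xpair_eqE !eqxx !andbT.
by case: (a == 0%N); rewrite ?mulr0.
Qed.

Lemma xo_theta (e : E) : xo e -> xo (theta e).
Proof. by move=> xe; rewrite /theta /= !xo_Dx ?xe. Qed.

Lemma sx_eqv (e : E) : x_only e -> eqv e (sx e).
Proof. by move=> xe J; rewrite eval_sx; apply: xe => i; rewrite /projJ eqxx. Qed.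

Section Hyps.
Variable chi : nat -> E.
Hypothesis H1 : forall J : jetR, eval J (chi 0%N) = eval J (u_x R).
Hypothesis H2 : forall k, x_only (chi k).
Hypothesis H3 : forall k, R0_rel (chi k) (Opp (chi k.+1)).

Definition c k := sx (chi k).

Lemma ce k : eqv (chi k) (c k).
Proof. exact: sx_eqv. Qed.

Lemma Key1 k J : eval J (Dx (c k.+1)) = eval J (theta (c k)).
Proof.
set J' := Jsol J 0.
have H := (H3 k).1 J' (Jsol_sol J 0).
have d0 := ce k J'; have d1 := Dx_compat _ _ (ce k) J'.
have d3 := Dx_compat _ _ (Dx_compat _ _ (Dx_compat _ _ (ce k))) J'.
have e1 := Dx_compat _ _ (ce k.+1) J'.
have : eval J' (Dx (c k.+1)) = eval J' (theta (c k)).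
  move: H; rewrite /theta /Opp /= /Dx in d0 d1 d3 e1 *.
  rewrite d0 d1 d3 e1 => H.
  have -> : eval J' (Dtot 1 0 0 (c k.+1)) = - (0 * eval J' (chi k.+1) + -1 * eval J' (Dtot 1 0 0 (c k.+1))) by ring.
  rewrite H; ring.
rewrite (xo_eval _ J' J); last by [].
  by move=> ->; apply: xo_eval => //; apply: xo_theta; apply: xo_sx.
by apply: xo_Dx; apply: xo_sx.
Qed.

Lemma Key2 k J : eval J (pd 0 0 0 (c k)) = 0.
Proof.
set J' := Jsol J 1.
have H := (H3 k).2 J' (Jsol_sol J 1).
have d0 := ce k J'; have d1 := Dx_compat _ _ (ce k) J'.
have dt := Dtot_compat 0 0 1 _ _ (ce k) J'.
have dy := Dtot_compat 0 1 0 _ _ (ce k.+1) J'.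
have Y := Dy_Jsol (c k.+1) J 1 (xo_sx _).
have T := Dt_Jsol (c k) J 1 (xo_sx _).
move: H; rewrite /Opp /= /Dx /Dy /Dt in d1 dt dy Y T *.
rewrite dt dy Y T d1 d0 /Jsol /= mulr1 => H.
have : eval J' (pd 0 0 0 (c k)) = 0 by move: H; rewrite /J' /Jsol /= => H'; lra.
by rewrite (xo_eval _ J' J) //; apply: xo_pd; apply: xo_sx.
Qed.

End Hyps.

End Basic.

Definition Gseq (R : realFieldType) (chi : nat -> dexp R) (k : nat) : dexp R :=
  match k with 0%N => Cst 1 | k'.+1 => Mul (Cst (-2)) (c R chi k') end.

Theorem proposition3 (R : realFieldType) (chi : nat -> dexp R) :
  (forall J : jet R, eval J (chi 0%N) = eval J (u_x R)) ->
  (forall k, x_only (chi k)) ->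
  (forall k, R0_rel (chi k) (Opp (chi k.+1))) ->
  forall (i j : nat) (J : jet R), eval J (jacobi (chi i) (chi j)) = 0.
Proof.
move=> H1 H2 H3 i j J.
have ce' := ce R chi H2.
rewrite jacobi_eval (Ev_compat_g _ _ _ _ (ce' i) J) (Ev_compat_e _ _ _ _ (ce' j) J).
rewrite (Ev_compat_g _ _ _ _ (ce' j) J) (Ev_compat_e _ _ _ _ (ce' i) J).
set G := Gseq R chi.
have xoG : forall k, xo R (G k) by case=> [|k] //=; rewrite xo_sx.
have G0 : eqv R (G 0%N) (Cst 1) by [].
have Len : forall k, eqv R (Dx (G k.+1)) (theta R (G k)).
  case=> [|k] J'.
    have h0 : eqv R (c R chi 0) (u_x R) by move=> J''; rewrite -(ce' 0%N J'') H1.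
    have := Dx_compat _ _ _ h0 J'; rewrite /G /Gseq /theta /= /Dx => ->.
    rewrite addn1 !addn0; ring.
  rewrite /G /Gseq theta_scale -(Key1 R chi H2 H3 k J') /=; ring.
have pd0G : forall k J', eval J' (pd 0 0 0 (G k)) = 0.
  case=> [|k] J' //=; rewrite (Key2 R chi H2 H3 k J'); ring.
have C := Ev_comm _ _ xoG G0 Len pd0G j.+1 i.+1 J.
move: C; rewrite /G /= !Ev_scale /= => C.
have : 4 * (eval J (Ev R (c R chi i) (c R chi j)) - eval J (Ev R (c R chi j) (c R chi i))) = 0.
  by rewrite mulrBr; move: C; lra.
by move/eqP; rewrite mulf_eq0 pnatr_eq0 /= => /eqP.
Qed.
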